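(* Let $\langle W,\varphi,(Y,\mathbb S,\sigma)\rangle$ be a monotone one-dimensional cocycle with skew-product system $(X,\mathbb S_+,\pi)$, $h=\mathrm{pr}_2$, and let $\tau\in\mathbb S_+$, $\tau>0$. Assume: (1) the discretization with step $\tau$ is strictly monotone, i.e. $u_1<u_2$ implies $\varphi(k\tau,u_1,y)<\varphi(k\tau,u_2,y)$ for all $k\in\mathbb N$, $y\in Y$; (2) $x_0\in X$ has precompact semi-trajectory $\{\pi(t,x_0):t\in\mathbb S_+\}$; (3) $y_0:=h(x_0)$ is asymptotically $\tau$-periodic. Let $q:=\lim_{k\to\infty}\sigma(k\tau,y_0)$, $X_q=h^{-1}(q)$, $\tilde\omega_{x_0}:=\omega_{x_0}\cap X_q$ and $P:=\pi(\tau,\cdot)$. Then: (i) $\omega_{x_0}$ is nonempty, compact and invariant ($\pi(t,\omega_{x_0})=\omega_{x_0}$ for $t\in\mathbb S_+$); (ii) $h(\omega_{x_0})=\omega_{y_0}$; (iii) $P(\tilde\omega_{x_0})=\tilde\omega_{x_0}$; (iv) every point of $\tilde\omega_{x_0}$ is $\tau$-periodic, i.e. $P(x)=x$ for all $x\in\tilde\omega_{x_0}$.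
   Context: $\mathbb S=\mathbb R$ or $\mathbb Z$, $\mathbb S_+=\{t\in\mathbb S:t\ge0\}$. $(Y,\mathbb S,\sigma)$ is a two-sided dynamical system on a complete metric space $Y$; $y$ is $\tau$-periodic if $\sigma(\tau,y)=y$, and $y_0$ is asymptotically $\tau$-periodic if there is a $\tau$-periodic $q$ with $\rho(\sigma(t,y_0),\sigma(t,q))\to0$ as $t\to+\infty$ (then $q=\lim_k\sigma(k\tau,y_0)$). $W\subseteq\mathbb R$ is an interval. A cocycle over $\sigma$ with fibre $W$ is a continuous $\varphi:\mathbb S_+\times W\times Y\to W$ with $\varphi(0,u,y)=u$, $\varphi(t+s,u,y)=\varphi(t,\varphi(s,u,y),\sigma(s,y))$; monotone means $u_1\le u_2\Rightarrow\varphi(t,u_1,y)\le\varphi(t,u_2,y)$. Skew-product: $X=W\times Y$, $\pi(t,(u,y))=(\varphi(t,u,y),\sigma(t,y))$, $h(u,y)=y$. $\omega_x$ ($\omega_y$) is the set of limits of $\pi(t_k,x)$ ($\sigma(t_k,y)$) with $t_k\to+\infty$, $t_k\in\mathbb S_+$. A point $x\in X$ is $\tau$-periodic if $\pi(\tau,x)=x$. *)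

(* Defs.v *)
From HB Require Import structures.
From mathcomp Require Import all_boot all_order all_algebra.
From mathcomp Require Import all_classical all_reals all_analysis.
Set Implicit Arguments. Unset Strict Implicit. Unset Printing Implicit Defensive.
Import Order.TTheory GRing.Theory Num.Theory.
Import numFieldNormedType.Exports.
Local Open Scope classical_set_scope.
Local Open Scope ring_scope.

(* The time set S is encoded as a subset of R:
   discrete = true  : S = Z (integers embedded in R),
   discrete = false : S = R. *)
Definition inS {R : realType} (discrete : bool) (t : R) : Prop :=
  if discrete then exists z : int, t = z%:~R else True.

Definition inSp {R : realType} (discrete : bool) (t : R) : Prop :=
  inS discrete t /\ 0 <= t.

Definition dyn_system {R : realType} {Y : topologicalType} (discrete : bool)
  (sigma : R -> Y -> Y) : Prop :=
  [/\ forall y, sigma 0 y = y,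
      forall t s y, inS discrete t -> inS discrete s ->
        sigma (t + s) y = sigma t (sigma s y)
    & {within [set z : R * Y | inS discrete z.1],
        continuous (fun z : R * Y => sigma z.1 z.2)}].

Definition cocycle {R : realType} {Y : topologicalType} (discrete : bool)
  (W : set R) (sigma : R -> Y -> Y) (phi : R -> R -> Y -> R) : Prop :=
  [/\ forall t u y, inSp discrete t -> W u -> W (phi t u y),
      forall u y, W u -> phi 0 u y = u,
      forall t s u y, inSp discrete t -> inSp discrete s -> W u ->
        phi (t + s) u y = phi t (phi s u y) (sigma s y)
    & {within [set z : R * R * Y | inSp discrete z.1.1 /\ W z.1.2],
        continuous (fun z : R * R * Y => phi z.1.1 z.1.2 z.2)}].

Definition monotone_cocycle {R : realType} {Y : Type} (discrete : bool)
  (W : set R) (phi : R -> R -> Y -> R) : Prop :=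
  forall t u1 u2 y, inSp discrete t -> W u1 -> W u2 -> u1 <= u2 ->
    phi t u1 y <= phi t u2 y.

Definition skew_prod {R : realType} {Y : Type} (sigma : R -> Y -> Y)
  (phi : R -> R -> Y -> R) (t : R) (x : R * Y) : R * Y :=
  (phi t x.1 x.2, sigma t x.2).

Definition Xsp {R : realType} {Y : Type} (W : set R) : set (R * Y) :=
  [set x | W x.1].

Definition times_to_infty {R : realType} (discrete : bool) (tk : nat -> R) : Prop :=
  (forall k, inSp discrete (tk k)) /\
  (forall M : R, exists N : nat, forall k, (N <= k)%N -> M <= tk k).

Definition omega_lim {R : realType} {T : topologicalType} (discrete : bool)
  (A : set T) (f : R -> T -> T) (x : T) : set T :=
  [set p | A p /\ exists tk : nat -> R, times_to_infty discrete tk /\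
      (fun k => f (tk k) x) @ \oo --> p].

Definition semi_traj {R : realType} {T : Type} (discrete : bool)
  (f : R -> T -> T) (x : T) : set T :=
  [set f t x | t in inSp discrete].

Definition precompact_in {T : topologicalType} (A B : set T) : Prop :=
  exists K, [/\ compact K, K `<=` A & B `<=` K].

Definition periodic_pt {R : realType} {Y : Type} (sigma : R -> Y -> Y)
  (tau : R) (y : Y) : Prop := sigma tau y = y.

Definition asympt_periodic {R : realType} {Y : pseudoMetricType R}
  (discrete : bool) (sigma : R -> Y -> Y) (tau : R) (y0 : Y) : Prop :=
  exists q, periodic_pt sigma tau q /\
    forall e : R, 0 < e -> exists T : R, forall t, inSp discrete t -> T <= t ->
      ball (sigma t y0) e (sigma t q).

(* Main.v *)
Require Import Defs.
From HB Require Import structures.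
From mathcomp Require Import all_boot all_order all_algebra.
From mathcomp Require Import all_classical all_reals all_analysis.
Import Order.TTheory GRing.Theory Num.Theory.
Import numFieldNormedType.Exports.
Local Open Scope classical_set_scope.
Local Open Scope ring_scope.

From mathcomp Require Import lra ring.
Set Implicit Arguments. Unset Strict Implicit. Unset Printing Implicit Defensive.

Section Gen.
Variable R : realType.

Lemma within_ball (T U : pseudoMetricType R) (D : set T) (g : T -> U) x :
  {within D, continuous g} -> D x -> forall e, 0 < e ->
  exists2 d, 0 < d & forall z, D z -> ball x d z -> ball (g x) e (g z).
Proof.
move=> /subspace_continuousP cg Dx e e0.
have := cg x Dx.
move/cvg_ballP => /(_ e e0).
rewrite /within => /nbhs_ballP [d d0 H].
exists d => // z Dz bz.
exact: (H z bz Dz).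
Qed.

Lemma ballR (x y e : R) : ball x e y <-> `|x - y| < e.
Proof. by rewrite -ball_normE. Qed.

Lemma ball_eq (T : pseudoMetricType R) (x y : T) : hausdorff_space T ->
  (forall e, 0 < e -> ball x e y) -> x = y.
Proof.
move=> hT H; rewrite -closeE // ball_close => e; exact: H.
Qed.

Lemma hausdorff_ball (T : pseudoMetricType R) :
  (forall x y : T, (forall e, 0 < e -> ball x e y) -> x = y) -> hausdorff_space T.
Proof.
move=> H p q cl; apply: H => e e0.
have e20 : 0 < e / 2 by rewrite divr_gt0.
have [z [z1 z2]] := cl _ _ (nbhsx_ballx _ _ e20) (nbhsx_ballx _ _ e20).
by rewrite (splitr e); apply: ball_triangle z1 (ball_sym z2).
Qed.

Lemma prod_hausdorff (U V : pseudoMetricType R) :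
  hausdorff_space U -> hausdorff_space V -> hausdorff_space (U * V)%type.
Proof.
move=> hU hV; apply: hausdorff_ball => -[a b] [c d] H.
congr pair; apply: ball_eq => // e e0; by case: (H e e0).
Qed.

Lemma nat_oo (P : nat -> Prop) : (\forall k \near \oo, P k) <-> exists N, forall k, (N <= k)%N -> P k.
Proof.
split.
  by move=> [N _ HN]; exists N => k Nk; apply: HN.
by move=> [N HN]; exists N => // k /= Nk; apply: HN.
Qed.

Lemma cluster_seq (T : pseudoMetricType R) (K : set T) (z : nat -> T) :
  compact K -> (forall n, K (z n)) ->
  exists p, K p /\ forall e, 0 < e -> forall N, exists n, (N <= n)%N /\ ball p e (z n).
Proof.
move=> cK Kz.
have [|p] := cK (z @ \oo) _ _.
  by apply/nat_oo; exists 0%N => k _; apply: Kz.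
move=> [Kp clp]; exists p; split => // e e0 N.
have FA : (z @ \oo) [set y | exists n, (N <= n)%N /\ y = z n].
  by apply/nat_oo; exists N => k Nk; exists k.
have [y [[n [Nn ->]] b]] := clp _ _ FA (nbhsx_ballx _ _ e0).
by exists n; split => //; apply: ball_sym.
Qed.

Lemma omP (T : pseudoMetricType R) discrete (A : set T) (f : R -> T -> T) x p :
  omega_lim discrete A f x p <-> A p /\ (forall e, 0 < e -> forall M,
     exists t, [/\ inSp discrete t, M <= t & ball p e (f t x)]).
Proof.
split.
  move=> [Ap [tk [[tS tinf] cv]]]; split => // e e0 M.
  have [N1 H1] := tinf M.
  have H2' : \forall k \near \oo, ball p e (f (tk k) x).
    by move/cvg_ballP: cv; apply.
  have [N2 H2] := iffLR (nat_oo _) H2'.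
  exists (tk (maxn N1 N2)); split => //.
    by apply: H1; rewrite leq_maxl.
  by apply: H2; rewrite leq_maxr.
move=> [Ap H]; split => //.
have H' : forall n : nat, exists t, [/\ inSp discrete t, n%:R <= t & ball p (n.+1%:R^-1) (f t x)].
  by move=> n; apply: H; rewrite invr_gt0 ltr0n.
pose tk n := projT1 (cid (H' n)).
have tkP n : [/\ inSp discrete (tk n), n%:R <= tk n & ball p (n.+1%:R^-1) (f (tk n) x)].
  exact: (projT2 (cid (H' n))).
exists tk; split; first split.
- by move=> n; case: (tkP n).
- move=> M; exists (Num.truncn M).+1 => k Nk.
  have [_ + _] := tkP k; apply: le_trans.
  apply: le_trans (ltW (truncnS_gt M)) _; by rewrite ler_nat.
apply/cvg_ballP => e e0; apply/nat_oo.
exists (Num.truncn (e^-1)) => k Nk.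
have [_ _ b] := tkP k; apply: le_ball b.
rewrite -(invrK e) lef_pV2 ?posrE ?ltr0n ?invr_gt0 //.
apply: ltW; apply: lt_le_trans (truncnS_gt _) _; by rewrite ler_nat.
Qed.


Lemma pigeon (N : nat) (g : nat -> nat) : (forall i, (i <= N)%N -> (g i < N)%N) ->
  exists i j, (i < j <= N)%N /\ g i = g j.
Proof.
move=> H.
pose G (i : 'I_N.+1) : 'I_N := Ordinal (H i (ltn_ord i)).
have : ~~ injectiveb G.
  apply/negP => /injectiveP /leq_card; by rewrite !card_ord ltnn.
case/injectivePn => i [j ij eq].
have eqg : g i = g j by have := congr1 val eq.
have iN := ltn_ord i; have jN := ltn_ord j.
case: (ltngtP i j) => [lt|lt|eij].
- by exists i, j; rewrite lt /=; split.
- by exists j, i; rewrite lt /=; split.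
- by move: ij; rewrite -(inj_eq val_inj) /= eij eqxx.
Qed.

Lemma truncn_close (x y : R) : 0 <= x -> 0 <= y -> Num.truncn x = Num.truncn y ->
  `|x - y| < 1.
Proof.
move=> x0 y0 e.
have /andP [a b] := truncn_itv x0; have /andP [c d] := truncn_itv y0.
rewrite e in a b; rewrite -addn1 natrD in b d.
rewrite ltr_norml; apply/andP; split; lra.
Qed.

End Gen.


Section Main.
Variables (R : realType) (Y : completePseudoMetricType R)
  (discrete : bool) (W : set R) (sigma : R -> Y -> Y) (phi : R -> R -> Y -> R)
  (tau : R) (x0 : R * Y) (q : Y).
Hypotheses (hY : hausdorff_space Y) (hW : is_interval W)
  (hds : dyn_system discrete sigma) (hcoc : cocycle discrete W sigma phi)
  (hmon : monotone_cocycle discrete W phi)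
  (htauS : inSp discrete tau) (htau0 : 0 < tau)
  (hstrict : forall (k : nat) u1 u2 y, W u1 -> W u2 -> u1 < u2 ->
      phi (k%:R * tau) u1 y < phi (k%:R * tau) u2 y)
  (hx0 : Xsp W x0)
  (hpre : precompact_in (Xsp W) (semi_traj discrete (skew_prod sigma phi) x0))
  (hap : asympt_periodic discrete sigma tau x0.2)
  (hq : (fun k : nat => sigma (k%:R * tau) x0.2) @ \oo --> q).

Local Notation pi := (skew_prod sigma phi).
Local Notation S := (@inS R discrete).
Local Notation Sp := (@inSp R discrete).

Lemma S0 : S 0.
Proof. by rewrite /inS; case: discrete => //; exists 0. Qed.

Lemma SD t s : S t -> S s -> S (t + s).
Proof.
rewrite /inS; case: discrete => // -[z1 ->] [z2 ->]; exists (z1 + z2).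
by rewrite intrD.
Qed.

Lemma SN t : S t -> S (- t).
Proof. rewrite /inS; case: discrete => // -[z1 ->]; exists (- z1); by rewrite mulrNz. Qed.

Lemma SB t s : S t -> S s -> S (t - s).
Proof. by move=> ? ?; apply: SD => //; apply: SN. Qed.

Lemma Snat (k : nat) t : S t -> S (k%:R * t).
Proof.
move=> St; elim: k => [|k IH]; first by rewrite mul0r; exact: S0.
by rewrite mulrSr mulrDl mul1r; apply: SD.
Qed.

Lemma S1 : S 1.
Proof. by rewrite /inS; case: discrete => //; exists 1. Qed.

Lemma Snat' (k : nat) : S k%:R.
Proof. by rewrite -[k%:R]mulr1; apply: Snat; exact: S1. Qed.

Lemma SpD t s : Sp t -> Sp s -> Sp (t + s).
Proof. by move=> [? ?] [? ?]; split; [apply: SD|apply: addr_ge0]. Qed.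

Lemma Spnat (k : nat) : Sp k%:R.
Proof. by split; [apply: Snat'|]. Qed.

Lemma Spnattau (k : nat) : Sp (k%:R * tau).
Proof. case: htauS => ? ?; split; [exact: Snat|exact: mulr_ge0]. Qed.

Lemma sig0 y : sigma 0 y = y.
Proof. by case: hds. Qed.
Lemma sigD t s y : S t -> S s -> sigma (t + s) y = sigma t (sigma s y).
Proof. by case: hds => _ H _; apply: H. Qed.
Lemma phiW t u y : Sp t -> W u -> W (phi t u y).
Proof. by case: hcoc => H _ _ _; apply: H. Qed.
Lemma phi0 u y : W u -> phi 0 u y = u.
Proof. by case: hcoc => _ H _ _; apply: H. Qed.
Lemma phiD t s u y : Sp t -> Sp s -> W u -> phi (t + s) u y = phi t (phi s u y) (sigma s y).
Proof. by case: hcoc => _ _ H _; apply: H. Qed.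

Lemma piD t s x : Sp t -> Sp s -> Xsp W x -> pi (t + s) x = pi t (pi s x).
Proof.
move=> [St ?] [Ss ?] Wx; rewrite /skew_prod /=.
by rewrite phiD // sigD.
Qed.

Lemma piW t x : Sp t -> Xsp W x -> Xsp W (pi t x).
Proof. by move=> St Wx; rewrite /Xsp /skew_prod /=; apply: phiW. Qed.

Lemma phi_cont t u y : Sp t -> W u -> forall e, 0 < e ->
  exists2 d, 0 < d & forall t' u' y', Sp t' -> W u' -> `|t - t'| < d ->
    `|u - u'| < d -> ball y d y' -> `|phi t u y - phi t' u' y'| < e.
Proof.
move=> St Wu e e0; case: hcoc => _ _ _ cphi.
have [d d0 H] := within_ball cphi (x := ((t, u), y)) (conj St Wu) e0.
exists d => // t' u' y' St' Wu' dt du dy.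
apply/ballR; apply: (H ((t', u'), y')) => //.
Qed.

Lemma sig_cont t y : S t -> forall e, 0 < e ->
  exists2 d, 0 < d & forall t' y', S t' -> `|t - t'| < d ->
    ball y d y' -> ball (sigma t y) e (sigma t' y').
Proof.
move=> St e e0; case: hds => _ _ csig.
have [d d0 H] := within_ball csig (x := (t, y)) St e0.
exists d => // t' y' St' dt dy.
by apply: (H (t', y')) => //; split => //; apply/ballR.
Qed.

Lemma pi_cont t p : Sp t -> Xsp W p -> forall e, 0 < e ->
  exists2 d, 0 < d & forall z, Xsp W z -> ball p d z -> ball (pi t p) e (pi t z).
Proof.
move=> St Wp e e0.
have [d1 d10 H1] := phi_cont p.2 St Wp e0.
have [d2 d20 H2] := sig_cont p.2 (proj1 St) e0.
exists (Num.min d1 d2); first by rewrite lt_min d10.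
move=> z Wz [b1 b2]; split; rewrite /skew_prod /=.
  apply/ballR; apply: H1 => //.
  - by rewrite subrr normr0.
  - by move/ballR: b1; move/lt_le_trans; apply; rewrite ge_min lexx.
  - by apply: le_ball b2; rewrite ge_min lexx.
apply: H2 => //; [by case: St|by rewrite subrr normr0|].
by apply: le_ball b2; rewrite ge_min lexx orbT.
Qed.


Lemma inv_small (e : R) : 0 < e -> exists N, forall n, (N <= n)%N -> n.+1%:R^-1 < e.
Proof.
move=> e0; exists (Num.truncn (e^-1)) => k Nk.
rewrite -(invrK e) ltf_pV2 ?posrE ?ltr0n ?invr_gt0 //.
apply: lt_le_trans (truncnS_gt _) _; by rewrite ler_nat.
Qed.

Lemma le_natR (M : R) n : ((Num.truncn M).+1 <= n)%N -> M <= n%:R.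
Proof. move=> h; apply: le_trans (ltW (truncnS_gt M)) _; by rewrite ler_nat. Qed.

Local Notation omx := (omega_lim discrete (Xsp W) pi x0).

Lemma cluster_om (s : nat -> R) : (forall n, Sp (s n) /\ n%:R <= s n) ->
  exists p, omx p /\ forall e, 0 < e -> forall N, exists n, (N <= n)%N /\ ball p e (pi (s n) x0).
Proof.
move=> hs; have [K [cK KW trK]] := hpre.
have [|p [Kp Hp]] := cluster_seq (z := fun n => pi (s n) x0) cK.
  by move=> n; apply: trK; exists (s n) => //; case: (hs n).
exists p; split => //; apply/omP; split; first exact: KW.
move=> e e0 M; have [n [Nn b]] := Hp e e0 (Num.truncn M).+1.
exists (s n); split => //; first by case: (hs n).
by apply: le_trans (le_natR Nn) _; case: (hs n).
Qed.

Lemma om_nonempty : omx !=set0.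
Proof.
have [|p [omp _]] := cluster_om (s := fun n => n%:R); last by exists p.
by move=> n; split => //; exact: Spnat.
Qed.

Lemma om_compact : compact omx.
Proof.
have [K [cK KW trK]] := hpre.
have clK : closed K by apply: compact_closed => //; apply: prod_hausdorff => //; exact: Rhausdorff.
have omK : omx `<=` K.
  move=> p /omP [_ H]; apply: clK => B /nbhs_ballP [e e0 sB].
  have [t [St _ b]] := H e e0 0.
  by exists (pi t x0); split; [apply: trK; exists t|apply: sB].
apply: (subclosed_compact _ cK omK) => p clp.
apply/omP; split.
  apply: KW; apply: clK => B nB; have [z [omz Bz]] := clp B nB.
  by exists z; split => //; apply: omK.
move=> e e0 M; have e20 : 0 < e / 2 by rewrite divr_gt0.
have [p' [omp' bp']] := clp _ (nbhsx_ballx _ _ e20).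
have [_ H] := iffLR (omP _ _ _ _ _) omp'.
have [t [St Mt b]] := H _ e20 M.
exists t; split => //.
by rewrite (splitr e); apply: ball_triangle bp' b.
Qed.

Lemma om_fwd t p : Sp t -> omx p -> omx (pi t p).
Proof.
move=> St /omP [Wp H]; apply/omP; split; first exact: piW.
move=> e e0 M; have [d d0 Hd] := pi_cont St Wp e0.
have [s [Ss Ms b]] := H d d0 M.
exists (t + s); split.
- exact: SpD.
- by rewrite -[M]add0r; apply: lerD => //; case: St.
- by rewrite piD //; apply: Hd => //; apply: piW.
Qed.

Lemma om_bwd t p : Sp t -> omx p -> exists2 p', omx p' & pi t p' = p.
Proof.
move=> St /omP [Wp H].
have H' : forall n : nat, exists s, [/\ Sp s, n%:R + t <= s & ball p (n.+1%:R^-1) (pi s x0)].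
  by move=> n; apply: H; rewrite invr_gt0 ltr0n.
pose sn n := projT1 (cid (H' n)).
have snP n : [/\ Sp (sn n), n%:R + t <= sn n & ball p (n.+1%:R^-1) (pi (sn n) x0)].
  exact: (projT2 (cid (H' n))).
have [|p' [omp' Hp']] := cluster_om (s := fun n => sn n - t).
  move=> n; have [[Ss _] le _] := snP n; split; last by rewrite lerBrDr.
  split; first by apply: SB => //; case: St.
  by rewrite subr_ge0; apply: le_trans le; rewrite lerDr.
exists p' => //.
have Wp' : Xsp W p' by case: omp'.
apply: ball_eq; first by apply: prod_hausdorff => //; exact: Rhausdorff.
move=> e e0; have e20 : 0 < e / 2 by rewrite divr_gt0.
have [d d0 Hd] := pi_cont St Wp' e20.
have [N HN] := inv_small e20.
have [n [Nn b]] := Hp' d d0 N.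
have [[Ss s0] _ bn] := snP n.
have St' : Sp (sn n - t).
  split; first by apply: SB => //; case: St.
  have [_ le _] := snP n; rewrite subr_ge0; apply: le_trans le; rewrite lerDr.
  by [].
have := Hd _ (piW St' hx0) b; rewrite -piD //.
rewrite addrC subrK => b2.
rewrite (splitr e); apply: ball_triangle b2 (ball_sym _).
by apply: le_ball bn; apply: ltW; apply: HN.
Qed.

Lemma om_inv t : Sp t -> pi t @` omx = omx.
Proof.
move=> St; apply/seteqP; split.
  by move=> z [p omp <-]; apply: om_fwd.
move=> p omp; have [p' omp' <-] := om_bwd St omp; by exists p'.
Qed.

Lemma om_snd : snd @` omx = omega_lim discrete setT sigma x0.2.
Proof.
apply/seteqP; split.
  move=> y [p /omP [_ H] <-]; apply/omP; split => // e e0 M.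
  by have [t [St Mt [_ b]]] := H e e0 M; exists t.
move=> y /omP [_ H].
have H' : forall n : nat, exists s, [/\ Sp s, n%:R <= s & ball y (n.+1%:R^-1) (sigma s x0.2)].
  by move=> n; apply: H; rewrite invr_gt0 ltr0n.
pose sn n := projT1 (cid (H' n)).
have snP n : [/\ Sp (sn n), n%:R <= sn n & ball y (n.+1%:R^-1) (sigma (sn n) x0.2)].
  exact: (projT2 (cid (H' n))).
have [|p [omp Hp]] := cluster_om (s := sn).
  by move=> n; have [? ? _] := snP n.
exists p => //; apply: ball_eq => // e e0; have e20 : 0 < e / 2 by rewrite divr_gt0.
have [N HN] := inv_small e20.
have [n [Nn [_ b]]] := Hp _ e20 N.
have [_ _ bn] := snP n.
rewrite (splitr e); apply: ball_triangle b (ball_sym _).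
by apply: le_ball bn; apply: ltW; apply: HN.
Qed.


Lemma sig_per (q' : Y) : sigma tau q' = q' -> forall k : nat, sigma (k%:R * tau) q' = q'.
Proof.
move=> hq'; elim => [|k IH]; first by rewrite mul0r sig0.
rewrite mulrSr mulrDl mul1r sigD ?hq' //; last by case: htauS.
by apply: Snat; case: htauS.
Qed.

Lemma hapq : sigma tau q = q /\ forall e, 0 < e -> exists T, forall t, Sp t -> T <= t ->
  ball (sigma t x0.2) e (sigma t q).
Proof.
have [q' [pq' H]] := hap.
suff eqq : q' = q by rewrite -eqq.
apply: ball_eq => // e e0; have e20 : 0 < e / 2 by rewrite divr_gt0.
have [T HT] := H _ e20.
have H2' : \forall k \near \oo, ball q (e/2) (sigma (k%:R * tau) x0.2).
  by move/cvg_ballP: hq; apply.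
have [N HN] := iffLR (nat_oo _) H2'.
pose k := maxn N (Num.truncn (T / tau)).+1.
have kT : T <= k%:R * tau.
  rewrite -ler_pdivrMr //; apply: le_natR; by rewrite leq_maxr.
have b1 := HT _ (Spnattau k) kT; rewrite (sig_per pq') in b1.
have b2 := HN k (leq_maxl _ _).
by rewrite (splitr e); apply: ball_triangle (ball_sym b1) (ball_sym b2).
Qed.

Lemma class_lemma (rho T : R) : (forall t, Sp t -> T <= t -> ball (sigma t x0.2) rho (sigma t q)) ->
  forall t, Sp t -> T <= t -> ball q rho (sigma t x0.2) ->
  forall k : nat, ball q (rho + rho + rho) (sigma (t + k%:R * tau) x0.2).
Proof.
move=> HT t St Tt b k.
have St' : Sp (t + k%:R * tau) by apply: SpD => //; apply: Spnattau.
have Tt' : T <= t + k%:R * tau.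
  by apply: le_trans Tt _; rewrite lerDl; case: (Spnattau k).
have b3 := HT _ St' Tt'.
rewrite [sigma _ q]sigD in b3; last first.
- by apply: Snat; case: htauS.
- by case: St.
rewrite (sig_per (proj1 hapq)) in b3.
apply: ball_triangle (ball_sym b3).
exact: ball_triangle b (HT _ St Tt).
Qed.

Lemma abs_s (s a e : R) : (s = 1 \/ s = -1) -> `|a| < e -> - e < s * a /\ s * a < e.
Proof.
move=> hs; rewrite ltr_norml => /andP [h1 h2].
by case: hs => ->; rewrite ?mul1r ?mulN1r; split; lra.
Qed.

Lemma mono_s (s t v1 v2 : R) y : (s = 1 \/ s = -1) -> Sp t -> W v1 -> W v2 ->
  0 <= s * (v1 - v2) -> 0 <= s * (phi t v1 y - phi t v2 y).
Proof.
move=> hs St W1 W2; case: hs => ->; rewrite ?mul1r ?mulN1r.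
  by rewrite !subr_ge0; apply: hmon.
by rewrite !oppr_ge0 !subr_le0; apply: hmon.
Qed.


Lemma core (s ustar : R) : (s = 1 \/ s = -1) -> omx (ustar, q) ->
  0 < s * (phi tau ustar q - ustar) -> False.
Proof.
move=> hs omu hpos0.
have s2 : s * s = 1 by case: hs => ->; rewrite ?mulr1 ?mulrNN ?mulr1.
have Wu : W ustar by case: omu.
set u := ustar in omu hpos0 Wu *.
set fu := phi tau u q in hpos0 *.
have [eps epsE] : {e : R | e = s * fu - s * u} by exists (s * fu - s * u).
have hpos : 0 < eps by rewrite epsE -mulrBr.
have Wfu : W fu by apply: phiW.
have e20 : 0 < eps / 2 by rewrite divr_gt0.
have [d1 d10 H1] := phi_cont q htauS Wu e20.
pose d := Num.min (d1 / 2) (eps / 4).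
have d0 : 0 < d by rewrite lt_min !divr_gt0.
have dle1 : d <= d1 / 2 by rewrite ge_min lexx.
have dle2 : d <= eps / 4 by rewrite ge_min lexx orbT.
pose c := u + s * d.
have sc : s * c = s * u + d by rewrite mulrDr mulrA s2 mul1r.
have Wc : W c.
  case: hs => hs; move: epsE; rewrite /c hs ?mul1r ?mulN1r => epsE.
    apply: (hW Wu Wfu); apply/andP; split; lra.
  apply: (hW Wfu Wu); apply/andP; split; lra.
have Hfc : `|fu - phi tau c q| < eps / 2.
  apply: H1 => //; first by rewrite subrr normr0.
    rewrite /c opprD addrA subrr sub0r normrN normrM.
    have -> : `|s| = 1 by case: hs => ->; rewrite ?normr1 ?normrN1.
    rewrite mul1r gtr0_norm //; lra.
  exact: ballxx.
have gam0 : 0 < s * (phi tau c q - c).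
  have [h1 h2] := abs_s hs Hfc.
  rewrite mulrBr in h1 h2; rewrite mulrBr sc; lra.
have [d2 d20 H2] := phi_cont q htauS Wc gam0.
have trap1 : forall v y, W v -> ball q d2 y -> 0 <= s * (v - c) ->
    0 < s * (phi tau v y - c).
  move=> v y Wv b h.
  have := H2 tau c y htauS Wc; rewrite !subrr !normr0 => /(_ d20 d20 b) h3.
  have [h4 h5] := abs_s hs h3.
  have h6 := mono_s y hs htauS Wv Wc h.
  rewrite !mulrBr in h4 h5 h6 gam0 *; lra.
have em0 : 0 < eps - d by rewrite subr_gt0; apply: le_lt_trans dle2 _; lra.
have [d3 d30 H3] := phi_cont q htauS Wu em0.
have base : forall v y, W v -> `|u - v| < d3 -> ball q d3 y -> 0 < s * (phi tau v y - c).
  move=> v y Wv h b.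
  have := H3 tau v y htauS Wv; rewrite subrr normr0 => /(_ d30 h b) h3.
  have [h4 h5] := abs_s hs h3.
  rewrite !mulrBr in h4 h5 *; rewrite sc -/fu in h4 h5 *; lra.
have d20' : 0 < d / 2 by rewrite divr_gt0.
have Sp0 : Sp 0 by split; [exact: S0|].
have [d4 d40 H4] := phi_cont q Sp0 Wu d20'.
have ret4 : forall r v y, Sp r -> W v -> `|r| < d4 -> `|u - v| < d4 -> ball q d4 y ->
    `|u - phi r v y| < d / 2.
  move=> r v y Sr Wv hr hv b.
  have := H4 r v y Sr Wv; rewrite sub0r normrN phi0 // => /(_ hr hv b) //.
have [d5 d50 H5] := phi_cont q Sp0 Wc d20'.
have ret5 : forall r y, Sp r -> `|r| < d5 -> ball q d5 y -> `|c - phi r c y| < d / 2.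
  move=> r y Sr hr b.
  have := H5 r c y Sr Wc; rewrite sub0r normrN phi0 // subrr normr0 => /(_ hr d50 b) //.
pose del := Num.min (Num.min d2 d3) (Num.min d4 d5).
have del0 : 0 < del by rewrite !lt_min d20 d30 d40 d50.
have del2 : del <= d2 by rewrite !ge_min lexx.
have del3 : del <= d3 by rewrite !ge_min lexx orbT.
have del4 : del <= d4 by rewrite !ge_min lexx orbT.
have del5 : del <= d5 by rewrite !ge_min lexx !orbT.
pose rho := del / 3.
have rho0 : 0 < rho by rewrite divr_gt0.
have rho3 : rho + rho + rho = del by rewrite /rho; field.
have rhod : rho <= del by rewrite /rho ler_pdivrMr //; lra.
pose eta := Num.min rho (d / 2).
have eta0 : 0 < eta by rewrite lt_min rho0 d20'.
have etar : eta <= rho by rewrite ge_min lexx.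
have etad : eta <= d / 2 by rewrite ge_min lexx orbT.
have [T HT] := (proj2 hapq) _ rho0.
pose ut t := phi t x0.1 x0.2.
pose yt t := sigma t x0.2.
have Wt : forall t, Sp t -> W (ut t) by move=> t St; apply: phiW.
have piu : forall t r, Sp t -> Sp r -> ut (r + t) = phi r (ut t) (yt t).
  by move=> t r St Sr; rewrite /ut phiD.
have class : forall t, Sp t -> T <= t -> ball q eta (yt t) ->
    forall k : nat, ball q del (yt (t + k%:R * tau)).
  move=> t St Tt b k; rewrite -rho3; exact: (class_lemma HT St Tt (le_ball etar b)).

have SpT : forall t (k : nat), Sp t -> Sp (t + k%:R * tau).
  by move=> t k St; apply: SpD => //; apply: Spnattau.
have trap : forall t, Sp t -> T <= t -> `|u - ut t| < eta -> ball q eta (yt t) ->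
    forall k : nat, 0 < s * (ut (t + k.+1%:R * tau) - c).
  move=> t St Tt h b; elim => [|k IH].
    rewrite mul1r [t + tau]addrC piu //; apply: base; first exact: Wt.
      by apply: lt_le_trans h _; apply: le_trans etar (le_trans rhod del3).
    by apply: le_ball b; apply: le_trans etar (le_trans rhod del3).
  have -> : t + k.+2%:R * tau = tau + (t + k.+1%:R * tau).
    by rewrite [k.+2%:R]mulrSr; ring.
  rewrite piu //; last exact: SpT.
  apply: trap1; first by apply: Wt; apply: SpT.
    by apply: le_ball (class t St Tt b k.+1).
  exact: ltW.
have dips : forall M, exists t, [/\ Sp t, M <= t, `|u - ut t| < eta & ball q eta (yt t)].
  move=> M; have [_ H] := iffLR (omP _ _ _ _ _) omu.
  have [t [St Mt [b1 b2]]] := H eta eta0 M.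
  by exists t; split => //; apply/ballR.
pose pick M := projT1 (cid (dips M)).
have pickP : forall M, [/\ Sp (pick M), M <= pick M, `|u - ut (pick M)| < eta & ball q eta (yt (pick M))].
  by move=> M; exact: (projT2 (cid (dips M))).
pose D := fix D (i : nat) : R := if i is i'.+1 then pick (D i' + 2 * tau) else pick T.
have DP : forall i, [/\ Sp (D i), T <= D i, `|u - ut (D i)| < eta & ball q eta (yt (D i))].
  elim => [|i [S1 T1 _ _]]; first by have [? ? ? ?] := pickP T.
  have [? le ? ?] := pickP (D i + 2 * tau); split => //.
  apply: le_trans T1 (le_trans _ le); rewrite lerDl; apply: mulr_ge0 => //; exact: ltW.
have Dgap : forall i j, (i < j)%N -> D i + 2 * tau <= D j.
  move=> i; elim => [//|j IH]; rewrite ltnS leq_eqVlt => /orP [/eqP ->|lt].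
    by have [_ ? _ _] := pickP (D j + 2 * tau).
  apply: le_trans (IH lt) _; have [_ le _ _] := pickP (D j + 2 * tau).
  apply: le_trans le; rewrite lerDl; apply: mulr_ge0 => //; exact: ltW.
pose dl := Num.min (Num.min d4 d5) tau.
have dl0 : 0 < dl by rewrite !lt_min d40 d50 htau0.
have dl4 : dl <= d4 by rewrite !ge_min lexx.
have dl5 : dl <= d5 by rewrite !ge_min lexx orbT.
have dlt : dl <= tau by rewrite !ge_min lexx orbT.
pose Nn := (Num.truncn (tau / dl)).+1.
have Nn0 : 0 < Nn%:R :> R by rewrite ltr0n.
have Nndl : tau / Nn%:R < dl.
  rewrite ltr_pdivrMr // mulrC -ltr_pdivrMr //; exact: truncnS_gt.
pose frac (t : R) := t / tau - (Num.floor (t / tau))%:~R.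
have frac0 : forall t, 0 <= frac t by move=> t; rewrite subr_ge0 floor_le.
have frac1 : forall t, frac t < 1.
  by move=> t; rewrite ltrBlDl -intrD1 floorD1_gt.
pose bin (t : R) := Num.truncn (frac t * Nn%:R).
have binlt : forall i, (i <= Nn)%N -> (bin (D i) < Nn)%N.
  move=> i _; rewrite truncn_lt_nat; last by apply: mulr_ge0 => //; exact: ltW.
  by rewrite -[X in _ < X]mul1r ltr_pM2r.
have [i [j [/andP [ij jN] eqb]]] := pigeon binlt.
have hfr : `|frac (D j) - frac (D i)| * Nn%:R < 1.
  have := truncn_close (mulr_ge0 (frac0 (D j)) (ltW Nn0)) (mulr_ge0 (frac0 (D i)) (ltW Nn0)) (esym eqb).
  by rewrite -mulrBl normrM (ger0_norm (ltW Nn0)).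
set a := D i in hfr *; set b := D j in hfr *.
have [Sa Ta ha ya] := DP i; have [Sb Tb hb yb] := DP j.
rewrite -/a in Sa Ta ha ya; rewrite -/b in Sb Tb hb yb.
have gab : a + 2 * tau <= b by exact: Dgap.
pose m := Num.floor (b / tau) - Num.floor (a / tau).
pose r := b - a - m%:~R * tau.
have rE : r = (frac b - frac a) * tau.
  rewrite /r /frac /m intrB; field; exact: lt0r_neq0.
have hr : `|r| < dl.
  rewrite rE normrM (gtr0_norm htau0); apply: le_lt_trans Nndl.
  rewrite mulrC ler_pdivlMr // -mulrA -[X in _ <= X]mulr1; apply: ler_wpM2l; [exact: ltW|exact: ltW hfr].

have [hr1 hr2] : - dl < r /\ r < dl by move: hr; rewrite ltr_norml => /andP.
have m1 : 1 < m.
  rewrite -(ltr1z R) -(ltr_pM2r htau0) mul1r.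
  have : m%:~R * tau = b - a - r by rewrite /r; ring.
  move=> ->; lra.
have [k mk] : exists k : nat, m = (k.+1)%:Z.
  have gen : forall z : int, 1 < z -> exists k : nat, z = (k.+1)%:Z.
    by case=> [[|k]|n] //; exists k.
  exact: gen.
have mR : m%:~R = k.+1%:R :> R by rewrite mk.
pose t1 := a + k.+1%:R * tau.
have St1 : Sp t1 by apply: SpT.
have tr := trap a Sa Ta ha ya k; rewrite -/t1 in tr.
have yt1 : ball q del (yt t1) by exact: class.
have rt : r = b - t1 by rewrite /r /t1 mR; ring.
case: (lerP 0 r) => r0.
  have Sr : Sp r by split => //; rewrite rt; apply: SB; [case: Sb|case: St1].
  have ubE : ut b = phi r (ut t1) (yt t1) by rewrite -piu // rt subrK.
  have h1 := mono_s (yt t1) hs Sr (Wt _ St1) Wc (ltW tr).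
  have h2 : `|c - phi r c (yt t1)| < d / 2.
    apply: ret5 => //; first by rewrite ger0_norm //; lra.
    by apply: le_ball yt1; apply: le_trans del5.
  have [h3 h4] := abs_s hs h2.
  have [h5 h6] := abs_s hs hb.
  rewrite -ubE !mulrBr in h1 h3 h4 h5 h6; rewrite mulrBr sc in tr.
  rewrite sc in h3 h4; lra.
have Snr : Sp (- r) by split; [apply: SN; rewrite rt; apply: SB; [case: Sb|case: St1]|lra].
have u1E : ut t1 = phi (- r) (ut b) (yt b) by rewrite -piu // rt opprB subrK.
have h2 : `|u - ut t1| < d / 2.
  rewrite u1E; apply: ret4 => //; first exact: Wt.
  - by rewrite normrN ltr0_norm //; lra.
  - apply: lt_le_trans hb _; apply: le_trans etar (le_trans rhod del4).
  - by apply: le_ball yb; apply: le_trans etar (le_trans rhod del4).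
have [h3 h4] := abs_s hs h2.
rewrite !mulrBr in h3 h4 tr; rewrite sc in tr; lra.
Qed.

Lemma fixpt x : omx x -> x.2 = q -> pi tau x = x.
Proof.
case: x => u y /= omu yq; subst y.
rewrite /skew_prod /=; congr pair; last exact: (proj1 hapq).
case: (ltrgtP (phi tau u q) u) => h //.
  exfalso; apply: (@core (-1) u (or_intror erefl) omu).
  by rewrite mulN1r oppr_gt0 subr_lt0.
exfalso; apply: (@core 1 u (or_introl erefl) omu).
by rewrite mul1r subr_gt0.
Qed.

Lemma main_sec :
  let pi := skew_prod sigma phi in
  let om := omega_lim discrete (Xsp W) pi x0 in
  let omt := om `&` [set x | x.2 = q] in
  let P := pi tau in
  [/\ om !=set0 /\ compact om /\
        (forall t, inSp discrete t -> pi t @` om = om),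
      snd @` om = omega_lim discrete setT sigma x0.2,
      P @` omt = omt
    & forall x, omt x -> P x = x].
Proof.
move=> pi0 om omt P.
split.
- split; first exact: om_nonempty.
  split; first exact: om_compact.
  by move=> t St; exact: om_inv.
- exact: om_snd.
- apply/seteqP; split.
    by move=> z [x [omx' xq] <-]; rewrite /P /pi0 fixpt.
  by move=> x [omx' xq]; exists x => //; rewrite /P /pi0 fixpt.
- by move=> x [omx' xq]; rewrite /P /pi0 fixpt.
Qed.

End Main.

Unset Implicit Arguments.

Theorem mainTheorem6 (R : realType) (Y : completePseudoMetricType R)
  (discrete : bool) (W : set R) (sigma : R -> Y -> Y) (phi : R -> R -> Y -> R)
  (tau : R) (x0 : R * Y) (q : Y) :
  hausdorff_space Y ->
  is_interval W ->
  dyn_system discrete sigma ->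
  cocycle discrete W sigma phi ->
  monotone_cocycle discrete W phi ->
  inSp discrete tau -> 0 < tau ->
  (forall (k : nat) u1 u2 y, W u1 -> W u2 -> u1 < u2 ->
      phi (k%:R * tau) u1 y < phi (k%:R * tau) u2 y) ->
  Xsp W x0 ->
  precompact_in (Xsp W) (semi_traj discrete (skew_prod sigma phi) x0) ->
  asympt_periodic discrete sigma tau x0.2 ->
  (fun k : nat => sigma (k%:R * tau) x0.2) @ \oo --> q ->
  let pi := skew_prod sigma phi in
  let om := omega_lim discrete (Xsp W) pi x0 in
  let omt := om `&` [set x | x.2 = q] in
  let P := pi tau in
  [/\ om !=set0 /\ compact om /\
        (forall t, inSp discrete t -> pi t @` om = om),
      snd @` om = omega_lim discrete setT sigma x0.2,
      P @` omt = omt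
    & forall x, omt x -> P x = x].
Proof.
move=> hY hW hds hcoc hmon htauS htau0 hstrict hx0 hpre hap hq.
by apply: main_sec.
Qed.
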